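(* The Lie algebra $\mathcal W$ (even part of $W(m,n;\underline t)$, over a field of characteristic $p>3$, $m,n\ge3$) is generated by $\mathcal M\cup\mathcal N\cup\mathcal P$, where $\mathcal M=\{x^{(q\varepsilon_i)}D_j\mid 0\le q\le\pi_i,\ i,j\in Y_0\}$, $\mathcal N=\{x_ix_kD_l\mid i\in Y_0,\ k,l\in Y_1\}$, $\mathcal P=\{x_kx_lD_i\mid i\in Y_0,\ k,l\in Y_1\}$.
   Context: $\mathbb F$ is a field of characteristic $p>3$; $m,n\ge 3$; $\underline t=(t_1,\dots,t_m)$ positive integers, $\pi_i=p^{t_i}-1$. $Y_0=\{1,\dots,m\}$, $Y_1=\{m+1,\dots,m+n\}$, $Y=Y_0\cup Y_1$, $\tau(r)=\bar0$ on $Y_0$, $\bar1$ on $Y_1$. $\mathfrak A=\mathfrak A(m,n;\underline t)$ is the supercommutative superalgebra with basis $x^{(\alpha)}x^u$ ($\alpha\in\mathbb N_0^m$, $\alpha_i\le\pi_i$; $u$ an increasing sequence in $Y_1$, $x^u$ the product of the odd generators $x_k$, $k\in u$), with $x^{(\alpha)}x^{(\beta)}=\prod_i\binom{\alpha_i+\beta_i}{\alpha_i}x^{(\alpha+\beta)}$ (zero if some index exceeds $\pi_i$), anticommuting $x_k$, parity $|u|\bmod2$; $x_i=x^{(\varepsilon_i)}$ for $i\in Y_0$ and $\varepsilon_i$ is the $i$-th unit vector. $D_i$ ($i\in Y_0$) sends $x^{(\alpha)}x^u\mapsto x^{(\alpha-\varepsilon_i)}x^u$, $D_k$ ($k\in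 Y_1$) is the odd partial derivative $\partial/\partial x_k$; $D_r$ has parity $\tau(r)$. $W=W(m,n;\underline t)=\{\sum_{r\in Y} f_rD_r:f_r\in\mathfrak A\}$ with bracket $[fD_r,gD_s]=fD_r(g)D_s-(-1)^{\mathrm p(fD_r)\mathrm p(gD_s)}gD_s(f)D_r$; $x^{(\alpha)}x^uD_r$ has parity $|u|+\tau(r)$. $\mathcal W=W_{\bar0}$. *)

(* Defs.v *)
From HB Require Import structures.
From mathcomp Require Import all_boot all_order all_algebra.
Set Implicit Arguments. Unset Strict Implicit. Unset Printing Implicit Defensive.
Import GRing.Theory.
Local Open Scope ring_scope.

(* Witt superalgebra W(m,n;t) over F.  Y0 = 'I_m (indices 1..m), Y1 = 'I_n
   (indices m+1..m+n, order preserved). *)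

(* multi-indices alpha with 0 <= alpha_i <= pi_i = p^(t_i) - 1 *)
Definition mono (p m : nat) (t : 'I_m -> nat) :=
  {dffun forall i : 'I_m, 'I_(p ^ t i)}.
(* basis x^(alpha) x^u of the divided power superalgebra A(m,n;t) *)
Definition idxA (p m n : nat) (t : 'I_m -> nat) := (mono p t * {set 'I_n})%type.
Definition Yidx (m n : nat) := ('I_m + 'I_n)%type.
(* basis x^(alpha) x^u D_r of W *)
Definition idxW (p m n : nat) (t : 'I_m -> nat) := (idxA p n t * Yidx m n)%type.

Notation Alg F p n t := {ffun idxA p n t -> F}.
Notation Witt F p n t := {ffun idxW p n t -> F}.

Section Witt.
Variables (F : fieldType) (p m n : nat) (t : 'I_m -> nat).
Local Notation A := (Alg F p n t).
Local Notation W := (Witt F p n t).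

Definition tau (r : Yidx m n) : bool := if r is inr _ then true else false.
Definition parW (b : idxW p n t) : bool := odd #|b.1.2| (+) tau b.2.

(* coefficient of x^(gamma) x^w in x^(alpha) x^u * x^(beta) x^v *)
Definition mcoef (a b c : idxA p n t) : F :=
  if [forall i, val (c.1 i) == (val (a.1 i) + val (b.1 i))%N]
     && (a.2 :&: b.2 == set0) && (c.2 == a.2 :|: b.2)
  then (\prod_(i < m) 'C(val (a.1 i) + val (b.1 i), val (a.1 i)))%:R
       * (-1) ^+ #|[set kl in setX a.2 b.2 | (kl.2 < kl.1)%N]|
  else 0.

Definition mulA (f g : A) : A :=
  [ffun c => \sum_(a : idxA p n t) \sum_(b : idxA p n t) f a * g b * mcoef a b c].

(* coefficient of x^(beta) x^v in D_r (x^(alpha) x^u) *)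
Definition dcoef (r : Yidx m n) (a c : idxA p n t) : F :=
  match r with
  | inl i => if (val (c.1 i)).+1 == val (a.1 i)
                 then ([forall j, (j != i) ==> (val (c.1 j) == val (a.1 j))]
                        && (c.2 == a.2))%:R
                 else 0
  | inr k => if (k \in a.2) && (c.1 == a.1) && (c.2 == a.2 :\ k)
             then (-1) ^+ #|[set l in a.2 | (l < k)%N]| else 0
  end.

Definition derA (r : Yidx m n) (f : A) : A :=
  [ffun c => \sum_(a : idxA p n t) f a * dcoef r a c].

Definition eA (a : idxA p n t) : A := [ffun c => (c == a)%:R].

Definition scW (k : F) (X : W) : W := [ffun b => k * X b].

Definition vD (f : A) (r : Yidx m n) : W :=
  [ffun b => if b.2 == r then f b.1 else 0].

(* bracket of basis elements
   [f D_r, g D_s] = f D_r(g) D_s - (-1)^(|f D_r||g D_s|) g D_s(f) D_r *)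
Definition brb (b c : idxW p n t) : W :=
  vD (mulA (eA b.1) (derA b.2 (eA c.1))) c.2
  - scW ((-1) ^+ (parW b && parW c)) (vD (mulA (eA c.1) (derA c.2 (eA b.1))) b.2).

Definition brW (X Y : W) : W :=
  \sum_(b : idxW p n t) \sum_(c : idxW p n t) scW (X b * Y c) (brb b c).

Definition evenW (X : W) : Prop := forall b, X b != 0 -> parW b = false.

Inductive genLie (S : W -> Prop) : W -> Prop :=
  | genLie_base X : S X -> genLie S X
  | genLie_zero : genLie S 0
  | genLie_add X Y : genLie S X -> genLie S Y -> genLie S (X + Y)
  | genLie_scale (c : F) X : genLie S X -> genLie S (scW c X)
  | genLie_br X Y : genLie S X -> genLie S Y -> genLie S (brW X Y).

Definition xdp (i : 'I_m) (q : nat) : A :=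
  [ffun a : idxA p n t => ((a.2 == set0) &&
              [forall j, val (a.1 j) == (if j == i then q else 0%N)])%:R].
Definition xev (i : 'I_m) : A := xdp i 1.
Definition xod (k : 'I_n) : A :=
  [ffun a : idxA p n t => ((a.2 == [set k]) && [forall j, val (a.1 j) == 0%N])%:R].

Definition genM (X : W) : Prop :=
  exists (i j : 'I_m) (q : nat), (q <= p ^ t i - 1)%N /\ X = vD (xdp i q) (inl j).
Definition genN (X : W) : Prop :=
  exists (i : 'I_m) (k l : 'I_n), X = vD (mulA (xev i) (xod k)) (inr l).
Definition genP (X : W) : Prop :=
  exists (i : 'I_m) (k l : 'I_n), X = vD (mulA (xod k) (xod l)) (inl i).

End Witt.

(* Main.v *)
Require Import Defs.
From mathcomp Require Import all_boot all_order all_algebra.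
From mathcomp Require Import zify.
Require Import Defs.
Set Implicit Arguments. Unset Strict Implicit. Unset Printing Implicit Defensive.
Import GRing.Theory.
Local Open Scope ring_scope.

Section P.
Variables (F : fieldType) (p m n : nat) (t : 'I_m -> nat).
Hypothesis Hp : (0 < p)%N.
Local Notation A := (Alg F p n t).
Local Notation W := (Witt F p n t).
Local Notation IA := (idxA p n t).
Local Notation IW := (idxW p n t).
Local Notation P j := (p ^ t j)%N.

Lemma pos j : (0 < P j)%N. Proof. by rewrite expn_gt0 Hp. Qed.

Definition mk (f : 'I_m -> nat) : mono p t :=
  [ffun j => Ordinal (ltn_pmod (f j) (pos j))].
Lemma mkE f j : val (mk f j) = (f j %% P j)%N. Proof. by rewrite ffunE. Qed.
Lemma mkEs f j : (f j < P j)%N -> val (mk f j) = f j.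
Proof. by move=> h; rewrite mkE modn_small. Qed.
Lemma mono_eq (a b : mono p t) : (forall j, val (a j) = val (b j)) -> a = b.
Proof. by move=> h; apply/ffunP => j; apply/val_inj; exact: h. Qed.
Lemma mk_eq f g : (forall j, (f j %% P j = g j %% P j)%N) -> mk f = mk g.
Proof. by move=> h; apply: mono_eq => j; rewrite !mkE. Qed.
Lemma mk_ext f g : (forall j, f j = g j) -> mk f = mk g.
Proof. by move=> h; apply: mk_eq => j; rewrite h. Qed.
Lemma mk_val (a : mono p t) : mk (fun j => val (a j)) = a.
Proof. by apply: mono_eq => j; rewrite mkEs // ltn_ord. Qed.

Definition Ix (f : 'I_m -> nat) (u : {set 'I_n}) : IA := (mk f, u).
Lemma Ix_val (a : IA) : a = Ix (fun j => val (a.1 j)) a.2.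
Proof. by rewrite /Ix mk_val -surjective_pairing. Qed.

Definition derI (r : Yidx m n) (a : IA) : IA :=
  match r with
  | inl i => (mk (fun j => if j == i then (val (a.1 j)).-1 else val (a.1 j)), a.2)
  | inr k => (a.1, a.2 :\ k) end.
Definition dval (r : Yidx m n) (a : IA) : F :=
  match r with
  | inl i => (0 < val (a.1 i))%N%:R
  | inr k => if k \in a.2 then (-1) ^+ #|[set l in a.2 | (l < k)%N]| else 0 end.

Lemma dcoefE r a c : dcoef F r a c = if c == derI r a then dval r a else 0.
Proof.
rewrite /dcoef; case: r => [i|k] /=.
  have lt j : ((val (a.1 j)).-1 < P j)%N by apply: leq_ltn_trans (leq_pred _) (ltn_ord _).
  case: (c =P _) => [->|cne] /=.
    rewrite mkEs; last by rewrite eqxx; exact: lt.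
    rewrite eqxx /=.
    case: (posnP (val (a.1 i))) => [->|pos_a] //=.
    rewrite prednK // eqxx eqxx andbT.
    suff -> : [forall j, (j != i) ==> (val (mk (fun j0 => if j0 == i then (val (a.1 j0)).-1 else val (a.1 j0)) j) == val (a.1 j))] by [].
    apply/forallP => j; apply/implyP => /negbTE ji; rewrite mkEs ji //; exact: ltn_ord.
  case: ifP => [/eqP h1|_]; last by [].
  case/boolP: [forall j, (j != i) ==> (val (c.1 j) == val (a.1 j))] => //= /forallP h2.
  case/boolP: (c.2 == a.2) => //= /eqP h3.
  exfalso; apply: cne; rewrite [c]surjective_pairing h3; congr (_, _).
  apply/mono_eq => j; rewrite mkEs; last by case: ifP => _; [exact: lt | exact: ltn_ord].
  case: ifP => [/eqP ->|/negbT ji]; first by rewrite -h1.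
  by apply/eqP; move/implyP: (h2 j); apply.
case: (c =P (a.1, a.2 :\ k)) => [->|cne] /=.
  by rewrite !eqxx !andbT.
case: ifP => //; case/andP => /andP [_ /eqP h1] /eqP h2.
by exfalso; apply: cne; rewrite -h1 -h2 -surjective_pairing.
Qed.

Definition sumI (a b : IA) : IA :=
  (mk (fun j => val (a.1 j) + val (b.1 j))%N, a.2 :|: b.2).
Definition mval (a b : IA) : F :=
  if [forall i, (val (a.1 i) + val (b.1 i) < P i)%N] && (a.2 :&: b.2 == set0)
  then (\prod_(i < m) 'C(val (a.1 i) + val (b.1 i), val (a.1 i)))%:R
       * (-1) ^+ #|[set kl in setX a.2 b.2 | (kl.2 < kl.1)%N]|
  else 0.

Lemma mcoefE a b c : mcoef F a b c = if c == sumI a b then mval a b else 0.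
Proof.
rewrite /mcoef /mval.
case: (c =P sumI a b) => [->|cne] /=.
  rewrite eqxx andbT.
  have -> : [forall i, val (mk (fun j => val (a.1 j) + val (b.1 j))%N i) == (val (a.1 i) + val (b.1 i))%N]
          = [forall i, (val (a.1 i) + val (b.1 i) < P i)%N].
    apply/forallP/forallP => h i.
      by rewrite -(eqP (h i)) mkE ltn_pmod ?pos.
    by rewrite mkEs.
  by [].
case: ifP => //; case/andP => /andP [/forallP h1 h2] /eqP h3.
exfalso; apply: cne; rewrite [c]surjective_pairing /sumI h3; congr (_, _).
apply: mono_eq => j; rewrite mkEs -(eqP (h1 j)) //.
Qed.


Lemma eAE (a c : IA) : eA F a c = (c == a)%:R.
Proof. by rewrite ffunE. Qed.

Lemma derA_eA r (a : IA) :
  derA r (eA F a) = [ffun c => if c == derI r a then dval r a else 0].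
Proof.
apply/ffunP => c; rewrite !ffunE (bigD1 a) //= [X in _ + X]big1 => [|b /negbTE nb].
  by rewrite eAE eqxx mul1r addr0 dcoefE.
by rewrite eAE nb mul0r.
Qed.

Lemma mulA_eA (a : IA) (g : A) :
  mulA (eA F a) g = [ffun e => \sum_d g d * mcoef F a d e].
Proof.
apply/ffunP => e; rewrite !ffunE (bigD1 a) //= [X in _ + X]big1 => [|b /negbTE nb].
  by rewrite addr0; apply: eq_bigr => d _; rewrite eAE eqxx mul1r.
by rewrite big1 // => d _; rewrite eAE nb !mul0r.
Qed.

Lemma PDE (a : IA) r c :
  mulA (eA F a) (derA r (eA F c)) =
  [ffun e => if e == sumI a (derI r c) then dval r c * mval a (derI r c) else 0].
Proof.
rewrite mulA_eA derA_eA; apply/ffunP => e; rewrite !ffunE (bigD1 (derI r c)) //= [X in _ + X]big1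
  => [|d /negbTE nd].
  by rewrite ffunE eqxx mcoefE addr0; case: ifP; rewrite ?mulr0.
by rewrite ffunE nd mul0r.
Qed.

Lemma mulA_eA2 (a b : IA) :
  mulA (eA F a) (eA F b) =
  [ffun e => if e == sumI a b then mval a b else 0].
Proof.
rewrite mulA_eA; apply/ffunP => e; rewrite !ffunE (bigD1 b) //= [X in _ + X]big1
  => [|d /negbTE nd].
  by rewrite eAE eqxx mul1r mcoefE addr0.
by rewrite eAE nd mul0r.
Qed.

Definition EW (b : IW) : W := [ffun x => (x == b)%:R].

Lemma scW0 (X : W) : scW 0 X = 0.
Proof. by apply/ffunP => x; rewrite !ffunE mul0r. Qed.
Lemma scW1 (X : W) : scW 1 X = X.
Proof. by apply/ffunP => x; rewrite !ffunE mul1r. Qed.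
Lemma scWA a b (X : W) : scW a (scW b X) = scW (a * b) X.
Proof. by apply/ffunP => x; rewrite !ffunE mulrA. Qed.
Lemma scWN1 (X : W) : scW (-1) X = - X.
Proof. by apply/ffunP => x; rewrite !ffunE mulN1r. Qed.

Lemma vD_fun (f : A) (e : IA) (k : F) r :
  f = [ffun x => if x == e then k else 0] -> vD f r = scW k (EW (e, r)).
Proof.
move=> ->; apply/ffunP => x; rewrite !ffunE.
rewrite [x]surjective_pairing xpair_eqE /=.
case: (x.2 =P r) => _; case: (x.1 =P e) => _ /=; rewrite ?ffunE ?mulr1 ?mulr0 //.
Qed.

Lemma vD_eA (a : IA) r : vD (eA F a) r = EW (a, r).
Proof.
rewrite (@vD_fun _ a 1) ?scW1 //.
by apply/ffunP => x; rewrite !ffunE; case: (x == a).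
Qed.

Definition K1 (b c : IW) : F := dval b.2 c.1 * mval b.1 (derI b.2 c.1).
Definition E1 (b c : IW) : IW := (sumI b.1 (derI b.2 c.1), c.2).
Definition K2 (b c : IW) : F :=
  (-1) ^+ (parW b && parW c) * (dval c.2 b.1 * mval c.1 (derI c.2 b.1)).
Definition E2 (b c : IW) : IW := (sumI c.1 (derI c.2 b.1), b.2).

Lemma brbE b c : brb F b c = scW (K1 b c) (EW (E1 b c)) - scW (K2 b c) (EW (E2 b c)).
Proof.
rewrite /brb (vD_fun _ (PDE _ _ _)) (vD_fun _ (PDE _ _ _)) scWA //.
Qed.

Lemma brW_EW b c : brW (EW b) (EW c) = brb F b c.
Proof.
rewrite /brW (bigD1 b) //= [X in _ + X]big1 => [|b' /negbTE nb].
  rewrite addr0 (bigD1 c) //= [X in _ + X]big1 => [|c' /negbTE nc].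
    by rewrite addr0 !ffunE !eqxx mul1r scW1.
  by rewrite !ffunE nc mulr0 scW0.
by rewrite big1 // => c' _; rewrite !ffunE nb mul0r scW0.
Qed.


Lemma scW_subl a b (X : W) : scW a X - scW b X = scW (a - b) X.
Proof. by apply/ffunP => x; rewrite !ffunE mulrBl. Qed.

Definition dec (f : 'I_m -> nat) s := fun j => if j == s then (f j).-1 else f j.
Definition upd (f : 'I_m -> nat) i v := fun j => if j == i then v else f j.
Definition dl i v := fun j : 'I_m => if j == i then v else 0%N.
Definition z0 := fun _ : 'I_m => 0%N.

Definition bnd (f : 'I_m -> nat) := forall j, (f j < P j)%N.

Lemma dl_eq i v : dl i v i = v. Proof. by rewrite /dl eqxx. Qed.
Lemma dl_neq i v j : j != i -> dl i v j = 0%N. Proof. by rewrite /dl => /negbTE ->. Qed.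

Lemma dec_lt f s : bnd f -> bnd (dec f s).
Proof. by move=> h j; rewrite /dec; case: ifP => _ //; apply: leq_ltn_trans (leq_pred _) (h j). Qed.
Lemma upd_lt f i v : bnd f -> (v < P i)%N -> bnd (upd f i v).
Proof. by move=> h hv j; rewrite /upd; case: ifP => [/eqP ->|_]. Qed.
Lemma dl_lt i v : (v < P i)%N -> bnd (dl i v).
Proof. by move=> hv j; rewrite /dl; case: ifP => [/eqP ->|_] //; exact: pos. Qed.
Lemma z0_lt : bnd z0.
Proof. by move=> j; exact: pos. Qed.

Lemma derI_inl s f u : bnd f -> derI (inl s) (Ix f u) = Ix (dec f s) u.
Proof. by move=> hf; rewrite /derI /Ix /=; congr (_, _); apply: mk_ext => j; rewrite mkEs. Qed.
Lemma dval_inl s f u : bnd f -> dval (inl s) (Ix f u) = (0 < f s)%N%:R.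
Proof. by move=> hf; rewrite /= mkEs. Qed.
Lemma sumI_Ix f g u v : sumI (Ix f u) (Ix g v) = Ix (fun j => f j + g j)%N (u :|: v).
Proof. by rewrite /sumI /Ix /=; congr (_, _); apply: mk_eq => j; rewrite !mkE modnDm. Qed.

Lemma mval_Ix f g u v : bnd f -> bnd g ->
  mval (Ix f u) (Ix g v) =
  if [forall i, (f i + g i < P i)%N] && (u :&: v == set0)
  then (\prod_(i < m) 'C(f i + g i, f i))%:R
       * (-1) ^+ #|[set kl in setX u v | (kl.2 < kl.1)%N]|
  else 0.
Proof.
move=> hf hg; rewrite /mval /=.
have -> : [forall i, (val (mk f i) + val (mk g i) < P i)%N] = [forall i, (f i + g i < P i)%N].
  by apply/eq_forallb => i; rewrite !mkEs.
by rewrite (eq_bigr (fun i => 'C(f i + g i, f i))) // => i _; rewrite !mkEs.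
Qed.

Lemma card0l (v : {set 'I_n}) : #|[set kl in setX (set0 : {set 'I_n}) v | (kl.2 < kl.1)%N]| = 0%N.
Proof.
apply/eqP; rewrite cards_eq0; apply/eqP/setP => kl; rewrite !inE.
by [].
Qed.
Lemma card0r (v : {set 'I_n}) : #|[set kl in setX v (set0 : {set 'I_n}) | (kl.2 < kl.1)%N]| = 0%N.
Proof.
apply/eqP; rewrite cards_eq0; apply/eqP/setP => kl; rewrite !inE.
by rewrite andbF.
Qed.

Lemma prod_one_but (h : 'I_m -> nat) i : (forall j, j != i -> h j = 1%N) -> (\prod_j h j = h i)%N.
Proof. by move=> H; rewrite (bigD1 i) //= big1 ?muln1 // => j /H. Qed.

Lemma mval_dl i v f u : (v < P i)%N -> bnd f ->
  mval (Ix (dl i v) set0) (Ix f u) = if (v + f i < P i)%N then ('C(v + f i, v))%:R else 0.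
Proof.
move=> hv hf; rewrite (mval_Ix _ _ (dl_lt hv) hf) set0I eqxx andbT card0l expr0 mulr1.
have -> : [forall j, (dl i v j + f j < P j)%N] = (v + f i < P i)%N.
  apply/forallP/idP => [/(_ i)|h j]; first by rewrite /dl eqxx.
  by rewrite /dl; case: ifP => [/eqP ->|_] //; rewrite add0n; exact: hf.
case: ifP => // _; congr (_%:R); rewrite (@prod_one_but _ i) /dl ?eqxx //.
by move=> j /negbTE ->; rewrite bin0.
Qed.

Lemma mval_dr i v f u : (v < P i)%N -> bnd f ->
  mval (Ix f u) (Ix (dl i v) set0) = if (f i + v < P i)%N then ('C(f i + v, f i))%:R else 0.
Proof.
move=> hv hf; rewrite (mval_Ix _ _ hf (dl_lt hv)) setI0 eqxx andbT card0r expr0 mulr1.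
have -> : [forall j, (f j + dl i v j < P j)%N] = (f i + v < P i)%N.
  apply/forallP/idP => [/(_ i)|h j]; first by rewrite /dl eqxx.
  by rewrite /dl; case: ifP => [/eqP ->|_] //; rewrite addn0.
case: ifP => // _; congr (_%:R); rewrite (@prod_one_but _ i) /dl ?eqxx //.
by move=> j /negbTE ->; rewrite addn0 binn.
Qed.

Lemma mval_zl v f u : bnd f ->
  mval (Ix z0 v) (Ix f u) = if v :&: u == set0 then (-1) ^+ #|[set kl in setX v u | (kl.2 < kl.1)%N]| else 0.
Proof.
move=> hf; rewrite (mval_Ix _ _ z0_lt hf).
have -> : [forall j, (z0 j + f j < P j)%N] by apply/forallP => j; rewrite /z0 add0n; exact: hf.
rewrite /=; case: ifP => // _; rewrite big1 ?mul1r // => j _; exact: bin0.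
Qed.

Lemma mval_zr v f u : bnd f ->
  mval (Ix f u) (Ix z0 v) = if u :&: v == set0 then (-1) ^+ #|[set kl in setX u v | (kl.2 < kl.1)%N]| else 0.
Proof.
move=> hf; rewrite (mval_Ix _ _ hf z0_lt).
have -> : [forall j, (f j + z0 j < P j)%N] by apply/forallP => j; rewrite /z0 addn0; exact: hf.
rewrite /=; case: ifP => // _; rewrite big1 ?mul1r // => j _; by rewrite /z0 addn0 binn.
Qed.

Lemma dval_z0 r v : dval r (Ix z0 v) = if r is inr k then dval r (Ix z0 v) else 0.
Proof. by case: r => [s|k] //=; rewrite mkEs // z0_lt. Qed.

Lemma parW_M i q s : parW ((Ix (dl i q) set0, inl s) : IW) = false.
Proof. by rewrite /parW /= cards0. Qed.


Lemma dval_inr k f u : dval (inr k) (Ix f u) =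
  if k \in u then (-1) ^+ #|[set l in u | (l < k)%N]| else 0.
Proof. by []. Qed.

Arguments derI : simpl never.
Arguments dval : simpl never.
Arguments sumI : simpl never.
Arguments mval : simpl never.
Arguments Ix : simpl never.
Arguments mk : simpl never.

Section Gen.
Variable S : W -> Prop.
Local Notation G := (genLie S).

Lemma G_opp X : G X -> G (- X).
Proof. by move=> h; rewrite -scWN1; apply: genLie_scale. Qed.
Lemma G_sub X Y : G X -> G Y -> G (X - Y).
Proof. by move=> hx hy; apply: genLie_add => //; apply: G_opp. Qed.
Lemma G_inv c X : c != 0 -> G (scW c X) -> G X.
Proof. by move=> c0 h; rewrite -[X]scW1 -(mulVf c0) -scWA; apply: genLie_scale. Qed.
Lemma G_sum (I : finType) (f : I -> W) : (forall i, G (f i)) -> G (\sum_i f i).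
Proof.
move=> h; apply: (big_ind (fun X => G X)); [exact: genLie_zero | | by move=> i _].
by move=> x y; apply: genLie_add.
Qed.

Lemma G_br b c : G (EW b) -> G (EW c) ->
  G (scW (K1 b c) (EW (E1 b c)) - scW (K2 b c) (EW (E2 b c))).
Proof. by move=> hb hc; rewrite -brbE -brW_EW; apply: genLie_br. Qed.

Lemma G_E1 b c : G (EW b) -> G (EW c) -> K1 b c != 0 ->
  (K2 b c = 0 \/ G (EW (E2 b c))) -> G (EW (E1 b c)).
Proof.
move=> hb hc k1 h2; apply: (G_inv k1); have := G_br hb hc.
case: h2 => [->|h2]; first by rewrite scW0 subr0.
move=> h; rewrite -[scW (K1 b c) _](subrK (scW (K2 b c) (EW (E2 b c)))).
by apply: genLie_add => //; apply: genLie_scale.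
Qed.

Lemma G_E2 b c : G (EW b) -> G (EW c) -> K2 b c != 0 ->
  (K1 b c = 0 \/ G (EW (E1 b c))) -> G (EW (E2 b c)).
Proof.
move=> hb hc k2 h1; apply: (G_inv k2); have := G_br hb hc.
case: h1 => [->|h1]; first by rewrite scW0 sub0r => /G_opp; rewrite opprK.
move=> h.
have -> : scW (K2 b c) (EW (E2 b c)) = scW (K1 b c) (EW (E1 b c)) - (scW (K1 b c) (EW (E1 b c)) - scW (K2 b c) (EW (E2 b c))).
  by rewrite opprB addrC subrK.
by apply: G_sub => //; apply: genLie_scale.
Qed.

Lemma G_E12 b c : G (EW b) -> G (EW c) -> E2 b c = E1 b c -> K1 b c - K2 b c != 0 ->
  G (EW (E1 b c)).
Proof.
move=> hb hc e k; apply: (G_inv k); have := G_br hb hc.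
by rewrite e scW_subl.
Qed.

Hypothesis hM : forall i s q, (q < P i)%N -> G (EW (Ix (dl i q) set0, inl s)).

Lemma Ix_ext f g u : (forall j, f j = g j) -> Ix f u = Ix g u.
Proof. by move=> h; rewrite /Ix (mk_ext h). Qed.

Lemma G_lower j f u r : bnd f -> (0 < f j)%N -> G (EW (Ix f u, r)) ->
  G (EW (Ix (dec f j) u, r)).
Proof.
move=> hf hj hc.
have hb : G (EW (Ix z0 set0, inl j)).
  rewrite -(@Ix_ext (dl j 0)); [apply: hM; exact: pos|].
  by move=> x; rewrite /dl; case: ifP.
set b := (Ix z0 set0, inl j) : IW; set c := (Ix f u, r) : IW.
have e1 : E1 b c = (Ix (dec f j) u, r).
  by rewrite /E1 /= derI_inl // sumI_Ix set0U (@Ix_ext _ (dec f j)).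
rewrite -e1; apply: G_E1 hb hc _ _.
  rewrite /K1 /= derI_inl // dval_inl // hj mval_zl; last exact: dec_lt.
  rewrite set0I eqxx card0l.
  by rewrite expr0 mulr1 oner_eq0.
left; rewrite /K2 /=; case: (r) => [s|k] /=.
  by rewrite dval_inl; [rewrite /z0 /= mul0r mulr0 | exact: z0_lt].
by rewrite dval_inr in_set0 mul0r mulr0.
Qed.

Lemma Ix2 f u : (Ix f u).2 = u. Proof. by []. Qed.

Lemma G_raise i q f u r : bnd f -> f i = 1%N -> (q < P i)%N ->
  (r = inl i -> 1 - q%:R != 0 :> F) -> G (EW (Ix f u, r)) -> G (EW (Ix (upd f i q) u, r)).
Proof.
move=> hf hfi hq hr hc.
have hb := hM i hq.
have hdl := dl_lt hq.
have hd := dec_lt i hf.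
have e1 : E1 (Ix (dl i q) set0, inl i) (Ix f u, r) = (Ix (upd f i q) u, r).
  rewrite /E1 /= derI_inl // sumI_Ix set0U (@Ix_ext _ (upd f i q)) // => j.
  by rewrite /dl /dec /upd; case: (eqVneq j i) => [->|ne]; rewrite ?eqxx ?(negbTE ne) ?hfi ?addn0.
have k1 : K1 (Ix (dl i q) set0, inl i) (Ix f u, r) = 1.
  rewrite /K1 /= derI_inl // dval_inl // hfi mval_dl //.
  by rewrite /dec eqxx hfi addn0 hq binn mulr1n mul1r.
rewrite -e1.
case: r hr hc e1 k1 => [s|k] hr hc e1 k1.
- case: (eqVneq s i) => [esi|nsi].
  + subst s. case: (posnP q) => [q0|qpos].
    * apply: G_E1 => //; first by rewrite k1 oner_eq0.
      by left; rewrite /K2 /= dval_inl // dl_eq q0 ltnn mul0r mulr0.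
    * have e2 : E2 (Ix (dl i q) set0, inl i) (Ix f u, inl i) = E1 (Ix (dl i q) set0, inl i) (Ix f u, inl i).
        rewrite e1 /E2 /= derI_inl // sumI_Ix setU0 (@Ix_ext _ (upd f i q)) // => j.
        by rewrite /dl /dec /upd; case: (eqVneq j i) => [->|ne]; rewrite ?eqxx ?(negbTE ne) ?hfi ?addn0 ?add1n ?prednK.
      have hq1 : (q.-1 < P i)%N by apply: leq_ltn_trans (leq_pred _) hq.
      have k2 : K2 (Ix (dl i q) set0, inl i) (Ix f u, inl i) = q%:R.
        rewrite /K2 /= parW_M /= expr0 mul1r dval_inl // dl_eq qpos mulr1n mul1r derI_inl //.
        rewrite (@Ix_ext (dec (dl i q) i) (dl i q.-1)); last first.
          by move=> j; rewrite /dec /dl; case: (j == i).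
        rewrite mval_dr //.
        by rewrite hfi add1n prednK // hq bin1.
      apply: G_E12 => //; rewrite k1 k2; exact: hr.
  + apply: G_E1 => //; first by rewrite k1 oner_eq0.
    by left; rewrite /K2 /= dval_inl // dl_neq // ltnn mul0r mulr0.
- apply: G_E1 => //; first by rewrite k1 oner_eq0.
  by left; rewrite /K2 /= dval_inr in_set0 mul0r mulr0.
Qed.

Lemma G_zero1 i f u : bnd f -> f i = 0%N -> (2 < P i)%N -> G (EW (Ix f u, inl i)) ->
  G (EW (Ix (upd f i 1) u, inl i)).
Proof.
move=> hf hfi h2 hc.
have hb := hM i h2. have hdl := dl_lt h2.
have h1 : (1 < P i)%N by apply: ltn_trans h2.
have e2 : E2 (Ix (dl i 2) set0, inl i) (Ix f u, inl i) = (Ix (upd f i 1) u, inl i).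
  rewrite /E2 /= derI_inl // sumI_Ix setU0 (@Ix_ext _ (upd f i 1)) // => j.
  by rewrite /dl /dec /upd; case: (eqVneq j i) => [->|ne]; rewrite ?eqxx ?(negbTE ne) ?hfi ?addn0.
rewrite -e2; apply: G_E2 => //.
  rewrite /K2 /= parW_M /= expr0 mul1r dval_inl // dl_eq /= mulr1n mul1r derI_inl //.
  rewrite (@Ix_ext (dec (dl i 2) i) (dl i 1)); last first.
    by move=> j; rewrite /dec /dl; case: (j == i).
  rewrite mval_dr //.
  by rewrite hfi add0n h1 bin0 oner_eq0.
by left; rewrite /K1 /= dval_inl // hfi ltnn mul0r.
Qed.

Lemma G_transfer i s q f u r : i != s -> bnd f -> f i = 0%N -> (0 < f s)%N -> (q < P i)%N ->
  r != inl i -> G (EW (Ix f u, r)) -> G (EW (Ix (upd (dec f s) i q) u, r)).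
Proof.
move=> nis hf hfi hfs hq hr hc.
have hb := hM s hq. have hdl := dl_lt hq. have hd := dec_lt s hf.
have e1 : E1 (Ix (dl i q) set0, inl s) (Ix f u, r) = (Ix (upd (dec f s) i q) u, r).
  rewrite /E1 /= derI_inl // sumI_Ix set0U (@Ix_ext _ (upd (dec f s) i q)) // => j.
  by rewrite /dl /dec /upd; case: (eqVneq j i) => [->|ne]; rewrite ?eqxx ?(negbTE ne) ?(negbTE nis) ?hfi ?addn0.
rewrite -e1; apply: G_E1 => //.
  rewrite /K1 /= derI_inl // dval_inl // hfs mval_dl //.
  by rewrite /dec (negbTE nis) hfi addn0 hq binn mulr1n mul1r oner_eq0.
left; rewrite /K2 /=; case: (r) hr => [s'|k] hr.
  rewrite dval_inl // dl_neq ?ltnn ?mul0r ?mulr0 //.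
by rewrite dval_inr in_set0 mul0r mulr0.
Qed.

Hypothesis hP1 : forall i, (1 < P i)%N.

Lemma G_conv k0 j u : j != k0 -> (forall a : IA, a.2 = u -> G (EW (a, inl k0))) ->
  forall a : IA, a.2 = u -> G (EW (a, inl j)).
Proof.
move=> njk h a ha.
suff H : forall f, bnd f -> G (EW (Ix f u, inl j)).
  by rewrite (Ix_val a) ha; apply: H => x; exact: ltn_ord.
move=> f hf.
have hb := hM j (hP1 k0). have hdl := dl_lt (hP1 k0).
have hc : G (EW (Ix f u, inl k0)) by apply: h.
have e2 : E2 (Ix (dl k0 1) set0, inl j) (Ix f u, inl k0) = (Ix f u, inl j).
  rewrite /E2 /= derI_inl // sumI_Ix setU0 (@Ix_ext _ f) // => x.
  by rewrite /dl /dec; case: (eqVneq x k0) => [->|ne]; rewrite ?eqxx ?(negbTE ne) addn0.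
rewrite -e2; apply: G_E2 => //.
  rewrite /K2 /= parW_M /= expr0 mul1r dval_inl // dl_eq /= mulr1n mul1r derI_inl //.
  rewrite (@Ix_ext (dec (dl k0 1) k0) (dl k0 0)); last first.
    by move=> x; rewrite /dec /dl; case: (x == k0).
  rewrite mval_dr ?pos //.
  by rewrite addn0 hf binn oner_eq0.
right; apply: h.
by rewrite /E1 /= set0U.
Qed.

Hypothesis hP : forall i k l, k != l -> G (EW (Ix z0 [set k; l], inl i)).

Lemma G_Pmul (i j : 'I_m) (k l : 'I_n) f (u : {set 'I_n}) : k != l -> k \notin u -> l \notin u -> bnd f -> (0 < f i)%N ->
  G (EW (Ix f u, inl j)) -> G (EW (Ix (dec f i) ([set k; l] :|: u), inl j)).
Proof.
move=> nkl ku lu hf hfi hc.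
have hb := hP i nkl. have hz := z0_lt. have hd := dec_lt i hf.
have e1 : E1 (Ix z0 [set k; l], inl i) (Ix f u, inl j) = (Ix (dec f i) ([set k; l] :|: u), inl j).
  by rewrite /E1 /= derI_inl // sumI_Ix (@Ix_ext _ (dec f i)).
rewrite -e1; apply: G_E1 => //.
  rewrite /K1 /= derI_inl // dval_inl // hfi mval_zl //.
  have -> : [set k; l] :&: u == set0.
    apply/eqP/setP => x; rewrite !inE; case: (eqVneq x k) => [->|_]; first by rewrite (negbTE ku).
    by case: (eqVneq x l) => [->|_] //; rewrite (negbTE lu).
  by rewrite mulr1n mul1r signr_eq0.
by left; rewrite /K2 /= dval_inl // /z0 ltnn mul0r mulr0.
Qed.

Hypothesis hN : forall i k l, G (EW (Ix (dl i 1) [set k], inr l)).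

Lemma G_Nmul (i : 'I_m) (k l : 'I_n) f (u : {set 'I_n}) : k \notin u -> l \notin u -> bnd f ->
  G (EW (Ix f u, inl i)) -> G (EW (Ix f (u :|: [set k]), inr l)).
Proof.
move=> ku lu hf hb.
have hc := hN i k l. have hdl := dl_lt (hP1 i). have hz := z0_lt.
have ed : derI (inl i) (Ix (dl i 1) [set k]) = Ix z0 [set k].
  rewrite derI_inl //; apply: Ix_ext => x; rewrite /dec /dl /z0.
  by case: (x == i).
have e1 : E1 (Ix f u, inl i) (Ix (dl i 1) [set k], inr l) = (Ix f (u :|: [set k]), inr l).
  by rewrite /E1 /= ed sumI_Ix (@Ix_ext _ f) // => x; rewrite /z0 addn0.
rewrite -e1; apply: G_E1 => //.
  rewrite /K1 /= ed dval_inl // dl_eq /= mulr1n mul1r mval_zr //.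
  have -> : u :&: [set k] == set0.
    apply/eqP/setP => x; rewrite !inE; case: (eqVneq x k) => [->|_]; last by rewrite andbF.
    by rewrite (negbTE ku).
  by rewrite signr_eq0.
by left; rewrite /K2 /= dval_inr (negbTE lu) mul0r mulr0.
Qed.

Hypothesis hP2 : forall i, (2 < P i)%N.
Hypothesis h1pi : forall i, 1 - (P i - 1)%:R != 0 :> F.

Lemma ordS (j : 'I_m) k (hkm : (k < m)%N) : (j < k.+1)%N = (j == Ordinal hkm) || (j < k)%N.
Proof. by rewrite ltnS leq_eqVlt -val_eqE. Qed.

Lemma G_lower_many i u r d : forall f, bnd f -> (d <= f i)%N -> G (EW (Ix f u, r)) ->
  G (EW (Ix (upd f i (f i - d)) u, r)).
Proof.
elim: d => [|d IH] f hf hd hc.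
  rewrite (@Ix_ext _ f) // => j; rewrite /upd subn0; case: ifP => // /eqP -> //.
have hg : bnd (upd f i (f i - d)).
  by apply: upd_lt => //; apply: leq_ltn_trans (leq_subr _ _) (hf i).
have hgi : (0 < upd f i (f i - d) i)%N by rewrite /upd eqxx subn_gt0.
have := G_lower hg hgi (IH f hf (ltnW hd) hc).
rewrite (@Ix_ext (dec (upd f i (f i - d)) i) (upd f i (f i - d.+1))) // => j.
by rewrite /dec /upd; case: (j == i) => //; rewrite subnS.
Qed.

Lemma G_lower_to u r f g : bnd f -> (forall j, g j <= f j)%N -> G (EW (Ix f u, r)) ->
  G (EW (Ix g u, r)).
Proof.
move=> hf hgf hc.
suff H : forall k, (k <= m)%N -> G (EW (Ix (fun j : 'I_m => if (j < k)%N then g j else f j) u, r)).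
  have := H m (leqnn m).
  by rewrite (@Ix_ext (fun j : 'I_m => if (j < m)%N then g j else f j) g) // => j; rewrite ltn_ord.
elim=> [|k IH] hk.
  by rewrite (@Ix_ext _ f) // => j.
have hkm : (k < m)%N := hk.
set ik := Ordinal hkm.
set h := fun j : 'I_m => if (j < k)%N then g j else f j.
have hh : bnd h.
  by move=> j; rewrite /h; case: ifP => _ //; apply: leq_ltn_trans (hgf j) (hf j).
have hik : h ik = f ik by rewrite /h /= ltnn.
have := G_lower_many (i := ik) (d := (f ik - g ik)%N) hh _ (IH (ltnW hk)).
rewrite hik leq_subr => /(_ isT).
rewrite (@Ix_ext (upd h ik (f ik - (f ik - g ik))) (fun j : 'I_m => if (j < k.+1)%N then g j else f j)) // => j.
rewrite /upd ordS -/ik; case: (eqVneq j ik) => [e|ne] /=.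
  by rewrite e subKn.
by [].
Qed.

Definition one := fun _ : 'I_m => 1%N.
Definition top := fun j : 'I_m => (P j - 1)%N.

Lemma top_lt : bnd top.
Proof. by move=> j; rewrite /top subn1 prednK ?pos //; rewrite ltn_predL pos. Qed.
Lemma one_lt : bnd one.
Proof. by move=> j; exact: hP1. Qed.

Lemma G_raise_all u r : G (EW (Ix one u, r)) -> G (EW (Ix top u, r)).
Proof.
move=> hc.
suff H : forall k, (k <= m)%N -> G (EW (Ix (fun j : 'I_m => if (j < k)%N then top j else one j) u, r)).
  have := H m (leqnn m).
  by rewrite (@Ix_ext (fun j : 'I_m => if (j < m)%N then top j else one j) top) // => j; rewrite ltn_ord.
elim=> [|k IH] hk; first by rewrite (@Ix_ext _ one) // => j.
have hkm : (k < m)%N := hk.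
set ik := Ordinal hkm.
set h := fun j : 'I_m => if (j < k)%N then top j else one j.
have hh : bnd h by move=> j; rewrite /h; case: ifP => _; [exact: top_lt | exact: one_lt].
have hik : h ik = 1%N by rewrite /h /= ltnn.
have := G_raise (i := ik) (q := top ik) hh hik (top_lt ik) _ (IH (ltnW hk)).
move=> /(_ (fun _ => h1pi ik)).
rewrite (@Ix_ext (upd h ik (top ik)) (fun j : 'I_m => if (j < k.+1)%N then top j else one j)) // => j.
rewrite /upd ordS -/ik; case: (eqVneq j ik) => [e|ne] /=.
  by rewrite e.
by [].
Qed.

Lemma G_from_one u r : G (EW (Ix one u, r)) -> forall a : IA, a.2 = u -> G (EW (a, r)).
Proof.
move=> h a ha; rewrite (Ix_val a) ha.
apply: (G_lower_to top_lt _ (G_raise_all h)) => j.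
by rewrite /top subn1 -ltnS prednK ?pos // ltn_ord.
Qed.

Definition ob (k0 : 'I_m) := fun j : 'I_m => if j == k0 then 0%N else 1%N.

Lemma G_base k0 s : s != k0 -> G (EW (Ix (ob k0) set0, inl k0)).
Proof.
move=> nsk.
pose hf k := fun j : 'I_m => if j == k0 then 0%N else if j == s then 1%N else if (j < k)%N then 1%N else 0%N.
have hb k : bnd (hf k).
  by move=> j; rewrite /hf; case: ifP => _; [exact: pos|case: ifP => _; [exact: hP1|case: ifP => _; [exact: hP1|exact: pos]]].
suff H : forall k, (k <= m)%N -> G (EW (Ix (hf k) set0, inl k0)).
  have := H m (leqnn m).
  rewrite (@Ix_ext (hf m) (ob k0)) // => j; rewrite /hf /ob ltn_ord.
  by case: ifP => //; case: ifP.
elim=> [|k IH] hk.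
  rewrite (@Ix_ext _ (dl s 1)); first exact: hM (hP1 s).
  move=> j; rewrite /hf /dl; case: (eqVneq j k0) => [e|ne] //.
  by rewrite e eq_sym (negbTE nsk).
have hkm : (k < m)%N := hk.
set ik := Ordinal hkm.
have IHk := IH (ltnW hk).
case: (boolP ((ik == k0) || (ik == s))) => hik.
  rewrite (@Ix_ext _ (hf k)) // => j; rewrite /hf ordS -/ik.
  case: (eqVneq j ik) => [e|ne] //=.
  rewrite e; case/orP: hik => /eqP ->; rewrite ?eqxx //.
move: hik; rewrite negb_or => /andP [hik0 hiks].
have hs : hf k s = 1%N by rewrite /hf (negbTE nsk) eqxx.
have r1 := G_raise (i := s) (q := 2) (hb k) hs (hP2 s) _ IHk.
have r2 : G (EW (Ix (upd (hf k) s 2) set0, inl k0)).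
  by apply: r1 => -[e]; move: nsk; rewrite e eqxx.
have hb2 := upd_lt (hb k) (hP2 s).
have hz : upd (hf k) s 2 ik = 0%N by rewrite /upd (negbTE hiks) /hf (negbTE hik0) (negbTE hiks) /= ltnn.
have hs2 : (0 < upd (hf k) s 2 s)%N by rewrite /upd eqxx.
have hr : (inl k0 : Yidx m n) != inl ik by apply/eqP => -[e]; move: hik0; rewrite e eqxx.
have := G_transfer (q := 1) hiks hb2 hz hs2 (hP1 ik) hr r2.
rewrite (@Ix_ext (upd (dec (upd (hf k) s 2) s) ik 1) (hf k.+1)) // => j.
rewrite /upd /dec /hf ordS -/ik.
case: (eqVneq j ik) => [e|ne] /=.
  by rewrite e (negbTE hik0) (negbTE hiks).
case: (eqVneq j s) => [e|ns] /=; first by rewrite e (negbTE nsk).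
by [].
Qed.

Variables (k0 s0 : 'I_m).
Hypothesis ns0 : s0 != k0.

Lemma ob_lt : bnd (ob k0).
Proof. by move=> j; rewrite /ob; case: ifP => _; [exact: pos | exact: hP1]. Qed.

Lemma G_fromob u : G (EW (Ix (ob k0) u, inl k0)) ->
  forall (j : 'I_m) (a : IA), a.2 = u -> G (EW (a, inl j)).
Proof.
move=> h.
have h1 : G (EW (Ix one u, inl k0)).
  rewrite (@Ix_ext one (upd (ob k0) k0 1)); last by move=> j; rewrite /upd /ob /one; case: (j == k0).
  by apply: G_zero1 => //; [exact: ob_lt | rewrite /ob eqxx].
have hall := G_from_one h1.
move=> j; case: (eqVneq j k0) => [->|njk]; first exact: hall.
exact: G_conv njk hall.
Qed.

Lemma G_even N : forall (u : {set 'I_n}), (#|u| <= N)%N -> ~~ odd #|u| ->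
  G (EW (Ix (ob k0) u, inl k0)).
Proof.
elim: N => [|N IH] u hu hev.
  by move: hu; rewrite leqn0 cards_eq0 => /eqP ->; exact: G_base ns0.
case: (set_0Vmem u) => [->|[k ku]]; first exact: G_base ns0.
have : (0 < #|u :\ k|)%N.
  move: hev; rewrite (cardsD1 k u) ku /=.
  by case: #|u :\ k|.
rewrite card_gt0 => /set0Pn [l]; rewrite !inE => /andP [nlk lu].
set u' := u :\ k :\ l.
have hcard : #|u| = (#|u'|.+2)%N.
  by rewrite (cardsD1 k u) ku (cardsD1 l (u :\ k)) !inE nlk lu.
have hu' : (#|u'| <= N)%N by move: hu; rewrite hcard ltnS; apply: leq_trans.
have hev' : ~~ odd #|u'| by move: hev; rewrite hcard /= negbK.
have h1 := G_fromob (IH u' hu' hev') k0 (a := Ix one u') (Ix2 _ _).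
have hku : k \notin u' by rewrite !inE eqxx andbF.
have hlu : l \notin u' by rewrite !inE eqxx.
have := @G_Pmul k0 k0 k l one u' _ hku hlu one_lt isT h1.
rewrite eq_sym nlk => /(_ isT).
rewrite (@Ix_ext (dec one k0) (ob k0)); last by move=> j; rewrite /dec /ob /one; case: (j == k0).
suff -> : [set k; l] :|: u' = u by [].
apply/setP => x; rewrite !inE.
case: (eqVneq x k) => [->|nxk] //=.
by case: (eqVneq x l) => [e|nxl] /=; [rewrite e lu | ].
Qed.

Lemma G_odd (u : {set 'I_n}) (l : 'I_n) : odd #|u| ->
  forall a : IA, a.2 = u -> G (EW (a, inr l)).
Proof.
move=> hodd a ha.
have [k [ku hl]] : exists k, k \in u /\ l \notin u :\ k.
  case: (boolP (l \in u)) => hlu.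
    by exists l; split => //; rewrite !inE eqxx.
  have : u != set0 by apply: contraTneq hodd => ->; rewrite cards0.
  by case/set0Pn => k ku; exists k; split => //; rewrite !inE (negbTE hlu) andbF.
set u' := u :\ k.
have hev : ~~ odd #|u'|.
  by move: hodd; rewrite (cardsD1 k u) ku /= add0n.
have hG : G (EW (Ix (fun j => val (a.1 j)) u', inl k0)).
  exact: (G_fromob (G_even (leqnn _) hev) k0 (Ix2 _ _)).
have hku : k \notin u' by rewrite !inE eqxx.
have := G_Nmul hku hl _ hG.
move=> /(_ (fun j => ltn_ord _)).
rewrite /u' setUC setD1K // => h.
by rewrite [X in EW (X, _)](Ix_val a) ha.
Qed.

Lemma G_allEW (b : IW) : parW b = false -> G (EW b).
Proof.
move: b => [a [j|l]]; rewrite /parW /=.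
  rewrite addbF => hev.
  by apply: (G_fromob (G_even (leqnn _) (negbT hev)) j); rewrite /Ix.
rewrite addbT => /negbFE hodd.
exact: G_odd hodd a erefl.
Qed.

End Gen.

Lemma evenWP (Z : W) : @evenW F p m n t Z <-> (forall x : IW, parW x -> Z x = 0).
Proof.
split => h x.
  by move=> px; apply/eqP; apply: contraTT px => /h ->.
by move=> zx; apply/negbTE; apply: contra zx => /h ->.
Qed.

Lemma mval_neq0 a d : mval a d != 0 -> a.2 :&: d.2 = set0.
Proof. by rewrite /mval; case: ifP => [/andP [_ /eqP ->] //|_]; rewrite eqxx. Qed.

Lemma card_sumI a d : a.2 :&: d.2 = set0 -> #|(sumI a d).2| = (#|a.2| + #|d.2|)%N.
Proof. by move=> h; rewrite /sumI /= cardsU h cards0 subn0. Qed.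

Lemma dval_card r c : dval r c != 0 -> odd #|c.2| = odd #|(derI r c).2| (+) tau r.
Proof.
case: r => [i|k] /=; first by rewrite /derI /= addbF.
rewrite /dval /derI /=; case: ifP => [kin _|]; last by rewrite eqxx.
by rewrite (cardsD1 k c.2) kin /= addbT.
Qed.

Lemma parE1 b c : K1 b c != 0 -> parW (E1 b c) = parW b (+) parW c.
Proof.
rewrite /K1 mulf_eq0 negb_or => /andP [hd hm].
rewrite /parW /E1 /= card_sumI ?(mval_neq0 hm) // oddD (dval_card hd).
rewrite !addbA.
by case: (odd #|b.1.2|); case: (odd #|(derI b.2 c.1).2|); case: (tau b.2); case: (tau c.2).
Qed.

Lemma parE2 b c : K2 b c != 0 -> parW (E2 b c) = parW b (+) parW c.
Proof.
rewrite /K2 mulf_eq0 negb_or => /andP [_ h].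
by have := parE1 h; rewrite /E1 /E2 addbC.
Qed.

Lemma evenW_br (X Y : W) : evenW X -> evenW Y -> evenW (brW X Y).
Proof.
move=> /evenWP hX /evenWP hY; apply/evenWP => x hx.
rewrite /brW sum_ffunE big1 // => b _; rewrite sum_ffunE big1 // => c _.
rewrite ffunE brbE !ffunE.
case: (boolP (parW b)) => pb; first by rewrite hX // !mul0r.
case: (boolP (parW c)) => pc; first by rewrite hY // mulr0 mul0r.
suff [-> ->] : K1 b c * (x == E1 b c)%:R = 0 /\ K2 b c * (x == E2 b c)%:R = 0.
  by rewrite subr0 mulr0.
split.
  case: (eqVneq (K1 b c) 0) => [->|k1]; first by rewrite mul0r.
  case: (eqVneq x (E1 b c)) => [e|_]; last by rewrite mulr0.
  by move: hx; rewrite e (parE1 k1) (negbTE pb) (negbTE pc).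
case: (eqVneq (K2 b c) 0) => [->|k2]; first by rewrite mul0r.
case: (eqVneq x (E2 b c)) => [e|_]; last by rewrite mulr0.
by move: hx; rewrite e (parE2 k2) (negbTE pb) (negbTE pc).
Qed.

Lemma evenW_scEW c b : c = 0 \/ parW b = false -> evenW (scW c (EW b)).
Proof.
move=> h; apply/evenWP => x px; rewrite !ffunE.
case: h => [->|pb]; first by rewrite mul0r.
case: (eqVneq x b) => [e|_]; last by rewrite mulr0.
by move: px; rewrite e pb.
Qed.

Lemma xdpE i q : (q < P i)%N -> xdp F p n t i q = eA F (Ix (dl i q) set0).
Proof.
move=> hq; apply/ffunP => a; rewrite !ffunE; congr (_%:R); congr nat_of_bool.
apply/idP/idP => [/andP [/eqP h2 /forallP h1]|/eqP ->].
  apply/eqP; rewrite [a]surjective_pairing h2 /Ix; congr (_, _); apply: mono_eq => j.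
  by rewrite mkEs ?(dl_lt hq) //; exact: (eqP (h1 j)).
apply/andP; split => //; apply/forallP => j; rewrite /Ix /= mkEs //; exact: dl_lt.
Qed.

Lemma xodE k : xod F p t k = eA F (Ix z0 [set k]).
Proof.
apply/ffunP => a; rewrite !ffunE; congr (_%:R); congr nat_of_bool.
apply/idP/idP => [/andP [/eqP h2 /forallP h1]|/eqP ->].
  apply/eqP; rewrite [a]surjective_pairing h2 /Ix; congr (_, _); apply: mono_eq => j.
  by rewrite mkEs ?z0_lt //; exact: (eqP (h1 j)).
apply/andP; split => //; apply/forallP => j; rewrite /Ix /= mkEs //; exact: z0_lt.
Qed.

Lemma genNE i k l : (1 < P i)%N ->
  vD (mulA (xev F p n t i) (xod F p t k)) (inr l) =
  scW (mval (Ix (dl i 1) set0) (Ix z0 [set k])) (EW (Ix (dl i 1) [set k], inr l))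
  /\ mval (Ix (dl i 1) set0) (Ix z0 [set k]) != 0.
Proof.
move=> h1; split.
  rewrite /xev xdpE // xodE (vD_fun _ (mulA_eA2 _ _)) sumI_Ix set0U.
  by rewrite (@Ix_ext (fun j => (dl i 1 j + z0 j)%N) (dl i 1)) // => j; rewrite /z0 addn0.
by rewrite mval_zr; [rewrite set0I eqxx signr_eq0 | exact: dl_lt].
Qed.

Lemma genPE i k l :
  vD (mulA (xod F p t k) (xod F p t l)) (inl i) =
  scW (mval (Ix z0 [set k]) (Ix z0 [set l])) (EW (Ix z0 [set k; l], inl i))
  /\ (k != l -> mval (Ix z0 [set k]) (Ix z0 [set l]) != 0)
  /\ (k = l -> mval (Ix z0 [set k]) (Ix z0 [set l]) = 0).
Proof.
split.
  rewrite !xodE (vD_fun _ (mulA_eA2 _ _)) sumI_Ix.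
  by rewrite (@Ix_ext _ z0).
rewrite mval_zl; last exact: z0_lt. split.
  move=> nkl; suff -> : [set k] :&: [set l] == set0 by rewrite signr_eq0.
  apply/eqP/setP => x; rewrite !inE; case: (eqVneq x k) => [->|] //=.
  exact: negbTE nkl.
move=> ->; suff -> : [set l] :&: [set l] == set0 = false by [].
by apply/negbTE/set0Pn; exists l; rewrite !inE eqxx.
Qed.

End P.

Unset Implicit Arguments.

Theorem proposition2p2p1 (F : fieldType) (p m n : nat) (t : 'I_m -> nat) :
  prime p -> (3 < p)%N -> p \in [pchar F] ->
  (3 <= m)%N -> (3 <= n)%N -> (forall i, 0 < t i)%N ->
  forall X : Witt F p n t,
    genLie (fun Y => genM Y \/ genN Y \/ genP Y) X <-> evenW X.
Proof.
move=> pr p3 pch m3 n3 ht X.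
have Hp : (0 < p)%N := prime_gt0 pr.
have hPge : forall i, (p <= p ^ t i)%N.
  by move=> i; rewrite -(prednK (ht i)) expnS leq_pmulr // expn_gt0 Hp.
have hP1 : forall i, (1 < p ^ t i)%N by move=> i; have := hPge i; lia.
have hP2 : forall i, (2 < p ^ t i)%N by move=> i; have := hPge i; lia.
have h2 : (2%:R : F) != 0.
  rewrite -(dvdn_pcharf pch); apply/negP => /dvdn_leq; lia.
have h1pi : forall i, 1 - ((p ^ t i - 1)%N%:R : F) != 0.
  move=> i.
  have e0 : ((p ^ t i)%:R : F) = 0.
    by apply/eqP; rewrite -(dvdn_pcharf pch) dvdn_exp // ht.
  rewrite natrB ?expn_gt0 ?Hp // e0 sub0r opprK.
  by [].
have m0 : (0 < m)%N by lia.
have m1 : (1 < m)%N by lia.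
pose k0 := Ordinal m0. pose s0 := Ordinal m1.
have ns0 : s0 != k0 by rewrite -val_eqE.
pose S : Witt F p n t -> Prop := fun Y => genM Y \/ genN Y \/ genP Y.
have hM : forall i s q, (q < p ^ t i)%N ->
    genLie S (EW F (Ix t Hp (dl i q) set0, inl s)).
  move=> i s q hq; rewrite -vD_eA -(xdpE F n Hp hq); apply: genLie_base.
  by left; exists i, s, q; split => //; lia.
have hN : forall i k l, genLie S (EW F (Ix t Hp (dl i 1) [set k], inr l)).
  move=> i k l; have [e c0] := genNE F Hp k l (hP1 i).
  apply: (G_inv c0); rewrite -e; apply: genLie_base.
  by right; left; exists i, k, l.
have hP : forall i k l, k != l -> genLie S (EW F (Ix t Hp (@z0 m) [set k; l], inl i)).
  move=> i k l nkl; have [e [c0 _]] := genPE F t Hp i k l.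
  apply: (G_inv (c0 nkl)); rewrite -e; apply: genLie_base.
  by right; right; exists i, k, l.
split.
  elim=> {X} [Y hY | | Y Z _ hY _ hZ | c Y _ hY | Y Z _ hY _ hZ].
  - case: hY => [[i [j [q [hq ->]]]] | [[i [k [l ->]]] | [i [k [l ->]]]]].
    + have hq' : (q < p ^ t i)%N by have := hP1 i; lia.
      rewrite (xdpE F n Hp hq') vD_eA -[EW _ _]scW1.
      by apply: evenW_scEW; right; rewrite parW_M.
    + have [e _] := genNE F Hp k l (hP1 i); rewrite e; apply: evenW_scEW; right.
      by rewrite /parW /= cards1.
    + have [e [_ h0]] := genPE F t Hp i k l; rewrite e; apply: evenW_scEW.
      case: (eqVneq k l) => [kl|nkl]; first by left; exact: h0.
      by right; rewrite /parW /= cards2 nkl.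
  - by apply/evenWP => x _; rewrite ffunE.
  - move: hY hZ => /evenWP hY /evenWP hZ; apply/evenWP => x px.
    by rewrite ffunE hY // hZ // addr0.
  - move: hY => /evenWP hY; apply/evenWP => x px.
    by rewrite ffunE hY // mulr0.
  - exact: (@evenW_br F p m n t Hp Y Z hY hZ).
move=> hX.
have -> : X = \sum_b scW (X b) (EW F b).
  apply/ffunP => x; rewrite sum_ffunE (bigD1 x) //= [X in _ + X]big1 => [|b nb].
    by rewrite !ffunE eqxx mulr1 addr0.
  by rewrite !ffunE eq_sym (negbTE nb) mulr0.
apply: G_sum => b.
case: (eqVneq (X b) 0) => [->|xb]; first by rewrite scW0; exact: genLie_zero.
apply: genLie_scale; apply: (G_allEW hM hP1 hP hN hP2 h1pi ns0).
exact: hX.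
Qed.
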